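(* Let $\mathcal{H}_C,\mathcal{H}_{C'}$ be finite-dimensional Hilbert spaces and let $\{\sigma_{abd|xyw}\}$ (with $a,b,d,x,y,w$ ranging over finite sets) be a (non-signalling) assemblage of positive semidefinite operators on $\mathcal{H}_{C}\otimes\mathcal{H}_{C'}$, prepared for Charlie after Alice, Bob and Dani, with inputs $x,y,w$, produce outputs $a,b,d$. Suppose that: (i) for all $x,y$: $\sigma_{d|w}=\mathrm{tr}_{C'}\big\{\sum_{a,b}\sigma_{abd|xyw}\big\}$ for all $d,w$; (ii) $\sum_{a,b}\sigma_{abd|xyw}=\psi\otimes\sigma_{d|w}$ for all $d,w,x,y$, where $\{\sigma_{d|w}\}_{d,w}$ is an extremal assemblage (of operators on $\mathcal{H}_C$) and $\psi$ is (the density operator of) a pure state on $\mathcal{H}_{C'}$. Then $\sigma_{abd|xyw}=\sigma_{ab|xy}\otimes\sigma_{d|w}$ for all $a,b,d,x,y,w$, where $\sigma_{ab|xy}=\mathrm{tr}_C\big\{\sum_d\sigma_{abd|xyw}\big\}$ is an operator on $\mathcal{H}_{C'}$ independent of $w$.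
   Context: An assemblage $\{\sigma_{abd|xyw}\}$ is a family of positive semidefinite operators whose sum over all outputs $a,b,d$ is a density operator independent of the inputs, and which satisfies the no-signalling conditions: summing over the output of any subset of the parties yields operators independent of those parties' inputs (in particular $p(ab|xyw)=\mathrm{tr}\sum_d\sigma_{abd|xyw}$ is independent of $w$). A bipartite assemblage $\{\sigma_{d|w}\}$ is a family of positive semidefinite operators with $\sum_d\sigma_{d|w}$ a density operator independent of $w$; it is extremal if it cannot be written as a nontrivial convex combination of other assemblages with the same input and output sets. In the tensor products the factor $\psi$ (resp. $\sigma_{ab|xy}$) acts on $\mathcal{H}_{C'}$ and $\sigma_{d|w}$ acts on $\mathcal{H}_C$. *)

(* Defs.v *)
(* Operators on finite-dimensional complex Hilbert spaces are
   square matrices over an arbitrary numClosedFieldType C (e.g. the complex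
   numbers); tensor products are Kronecker products (real_closed's mxtens). *)
From HB Require Import structures.
From mathcomp Require Import all_boot all_order all_algebra.
From mathcomp.real_closed Require Export mxtens.
Set Implicit Arguments. Unset Strict Implicit. Unset Printing Implicit Defensive.
Import Order.TTheory GRing.Theory Num.Theory.
Local Open Scope ring_scope.

Section QDefs.
Variable C : numClosedFieldType.

Definition adjmx m n (M : 'M[C]_(m, n)) : 'M[C]_(n, m) := map_mx Num.conj (M^T).

Definition psd n (M : 'M[C]_n) : Prop :=
  adjmx M = M /\ forall v : 'rV[C]_n, 0 <= (v *m M *m adjmx v) 0 0.

Definition density n (M : 'M[C]_n) : Prop := psd M /\ \tr M = 1.

Definition pure_state n (M : 'M[C]_n) : Prop :=
  exists u : 'cV[C]_n, (adjmx u *m u) 0 0 = 1 /\ M = u *m adjmx u.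

Definition ptrace1 n1 n2 (M : 'M[C]_(n1 * n2)) : 'M[C]_n2 :=
  \matrix_(i, j) \sum_(k < n1) M (mxtens_index (k, i)) (mxtens_index (k, j)).
Definition ptrace2 n1 n2 (M : 'M[C]_(n1 * n2)) : 'M[C]_n1 :=
  \matrix_(i, j) \sum_(k < n2) M (mxtens_index (i, k)) (mxtens_index (j, k)).

Definition assemblage2 (D W : finType) n (s : D -> W -> 'M[C]_n) : Prop :=
  (forall d w, psd (s d w)) /\
  exists rho : 'M[C]_n, density rho /\ forall w, \sum_d s d w = rho.

Definition extremal_assemblage2 (D W : finType) n (s : D -> W -> 'M[C]_n) : Prop :=
  assemblage2 s /\
  forall (p : C) (s1 s2 : D -> W -> 'M[C]_n),
    0 < p -> p < 1 -> assemblage2 s1 -> assemblage2 s2 ->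
    (forall d w, s d w = p *: s1 d w + (1 - p) *: s2 d w) ->
    s1 = s /\ s2 = s.

Definition assemblage3 (A B D X Y W : finType) n
    (s : A -> B -> D -> X -> Y -> W -> 'M[C]_n) : Prop :=
  (forall a b d x y w, psd (s a b d x y w)) /\
  (exists rho : 'M[C]_n, density rho /\
     forall x y w, \sum_a \sum_b \sum_d s a b d x y w = rho) /\
  (forall b d x x' y w, \sum_a s a b d x y w = \sum_a s a b d x' y w) /\
  (forall a d x y y' w, \sum_b s a b d x y w = \sum_b s a b d x y' w) /\
  (forall a b x y w w', \sum_d s a b d x y w = \sum_d s a b d x y w') /\
  (forall d x x' y y' w,
     \sum_a \sum_b s a b d x y w = \sum_a \sum_b s a b d x' y' w) /\
  (forall b x x' y w w',
     \sum_a \sum_d s a b d x y w = \sum_a \sum_d s a b d x' y w') /\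
  (forall a x y y' w w',
     \sum_b \sum_d s a b d x y w = \sum_b \sum_d s a b d x y' w').

End QDefs.

(* Main.v *)
Require Import Defs.
From HB Require Import structures.
From mathcomp Require Import all_boot all_order all_algebra.
From mathcomp.real_closed Require Import mxtens.
From mathcomp Require Import ring.
Import Order.TTheory GRing.Theory Num.Theory.
Set Implicit Arguments. Unset Strict Implicit. Unset Printing Implicit Defensive.
Local Open Scope ring_scope.
Lemma adjmxE (C : numClosedFieldType) m n (M : 'M[C]_(m, n)) i j :
  adjmx M i j = (M j i)^*.
Proof. by rewrite /adjmx !mxE. Qed.

Lemma adjmxK (C : numClosedFieldType) m n (M : 'M[C]_(m, n)) :
  adjmx (adjmx M) = M.
Proof. by apply/matrixP=> i j; rewrite !adjmxE conjCK. Qed.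

Lemma adjmxM (C : numClosedFieldType) m n p (A : 'M[C]_(m, n)) (B : 'M[C]_(n, p)) :
  adjmx (A *m B) = adjmx B *m adjmx A.
Proof.
apply/matrixP=> i j; rewrite !mxE rmorph_sum; apply: eq_bigr=> k _.
by rewrite !adjmxE rmorphM mulrC.
Qed.

Lemma adjmxD (C : numClosedFieldType) m n (A B : 'M[C]_(m, n)) :
  adjmx (A + B) = adjmx A + adjmx B.
Proof. by apply/matrixP=> i j; rewrite !mxE rmorphD. Qed.

Lemma adjmxN (C : numClosedFieldType) m n (A : 'M[C]_(m, n)) :
  adjmx (- A) = - adjmx A.
Proof. by apply/matrixP=> i j; rewrite !mxE rmorphN. Qed.

Lemma adjmxB (C : numClosedFieldType) m n (A B : 'M[C]_(m, n)) :
  adjmx (A - B) = adjmx A - adjmx B.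
Proof. by rewrite adjmxD adjmxN. Qed.

Lemma adjmxZ (C : numClosedFieldType) m n (c : C) (A : 'M[C]_(m, n)) :
  adjmx (c *: A) = c^* *: adjmx A.
Proof. by apply/matrixP=> i j; rewrite !mxE rmorphM. Qed.

Lemma adjmx_sum (C : numClosedFieldType) m n (I : finType) (F : I -> 'M[C]_(m, n)) :
  adjmx (\sum_i F i) = \sum_i adjmx (F i).
Proof.
apply/matrixP=> i j; rewrite adjmxE !summxE rmorph_sum.
by apply: eq_bigr=> k _; rewrite adjmxE.
Qed.

Lemma adjmx1 (C : numClosedFieldType) n : adjmx (1%:M : 'M[C]_n) = 1%:M.
Proof. by apply/matrixP=> i j; rewrite !mxE eq_sym rmorph_nat. Qed.

Lemma adjmx0 (C : numClosedFieldType) m n : adjmx (0 : 'M[C]_(m,n)) = 0.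
Proof. by apply/matrixP=> i j; rewrite !mxE rmorph0. Qed.

Lemma mxDE (R : nmodType) m n (A B : 'M[R]_(m, n)) i j : (A + B) i j = A i j + B i j.
Proof. by rewrite mxE. Qed.
Lemma mxNE (R : zmodType) m n (A : 'M[R]_(m, n)) i j : (- A) i j = - A i j.
Proof. by rewrite mxE. Qed.
Lemma mxBE (R : zmodType) m n (A B : 'M[R]_(m, n)) i j : (A - B) i j = A i j - B i j.
Proof. by rewrite !mxE. Qed.
Lemma mxZE (R : pzRingType) m n (a : R) (A : 'M[R]_(m, n)) i j : (a *: A) i j = a * A i j.
Proof. by rewrite mxE. Qed.

Lemma adj00 (C : numClosedFieldType) (X : 'M[C]_1) : (adjmx X) 0 0 = (X 0 0)^*.
Proof. by rewrite adjmxE. Qed.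

Lemma psd_herm (C : numClosedFieldType) n (M : 'M[C]_n) (w z : 'rV[C]_n) :
  adjmx M = M -> (z *m M *m adjmx w) 0 0 = ((w *m M *m adjmx z) 0 0)^*.
Proof.
by move=> hM; rewrite -adj00 !adjmxM adjmxK hM mulmxA.
Qed.

Lemma psd_zero (C : numClosedFieldType) n (M : 'M[C]_n) (w : 'rV[C]_n) :
  psd M -> (w *m M *m adjmx w) 0 0 = 0 -> w *m M = 0.
Proof.
move=> [hM pM] w0.
have key : forall z : 'rV[C]_n, (w *m M *m adjmx z) 0 0 = 0.
  move=> z; set c := (w *m M *m adjmx z) 0 0.
  set k := (z *m M *m adjmx z) 0 0.
  have k0 : 0 <= k by apply: pM.
  have czw : (z *m M *m adjmx w) 0 0 = c^* by rewrite psd_herm.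
  have k1 : 0 <= k + 1 by rewrite addr_ge0.
  have := pM ((k + 1) *: w - c *: z).
  rewrite adjmxB !adjmxZ (geC0_conj k1) !mulmxBl !mulmxBr -!scalemxAl -!scalemxAr.
  rewrite !mxBE.
  rewrite !mxZE w0 czw -/c -/k.
  have -> : (k + 1) * ((k + 1) * 0) - (k + 1) * (c^* * c) -
    (c * ((k + 1) * c^*) - c * (c^* * k)) = - ((c * c^*) * (k + 2)).
    by rewrite mulr0 mulr0; ring.
  rewrite oppr_ge0 pmulr_lle0; last by rewrite ltr_wpDl.
  move=> h; apply/eqP; rewrite -mul_conjC_eq0 eq_le h mul_conjC_ge0 //.
apply/matrixP=> i j; rewrite ord1 [RHS]mxE.
have := key (delta_mx 0 j).
have -> : adjmx (delta_mx 0 j : 'rV[C]_n) = delta_mx j 0.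
  by apply/matrixP=> a b; rewrite adjmxE !mxE rmorph_nat andbC.
by rewrite -colE mxE.
Qed.

Lemma adjmx_delta (C : numClosedFieldType) n (j : 'I_n) :
  adjmx (delta_mx 0 j : 'rV[C]_n) = delta_mx j 0.
Proof. by apply/matrixP=> a b; rewrite adjmxE !mxE rmorph_nat andbC. Qed.

Lemma qdelta (C : numClosedFieldType) n (M : 'M[C]_n) (i : 'I_n) :
  ((delta_mx 0 i : 'rV[C]_n) *m M *m adjmx (delta_mx 0 i : 'rV[C]_n)) 0 0 = M i i.
Proof. by rewrite adjmx_delta -rowE -colE !mxE. Qed.

Lemma psd_tr_ge0 (C : numClosedFieldType) n (M : 'M[C]_n) : psd M -> 0 <= \tr M.
Proof.
move=> [_ pM]; rewrite /mxtrace; apply: sumr_ge0=> i _.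
by rewrite -qdelta.
Qed.

Lemma psd_tr0 (C : numClosedFieldType) n (M : 'M[C]_n) : psd M -> \tr M = 0 -> M = 0.
Proof.
move=> hM t0; have [_ pM] := hM.
have d0 : forall i, M i i = 0.
  move=> i; apply: (psumr_eq0P (P := predT) (F := fun i => M i i)) => // j _.
  by rewrite -qdelta.
apply/row_matrixP=> i; rewrite row0 rowE; apply: psd_zero=> //.
by rewrite qdelta.
Qed.

Lemma psd_add (C : numClosedFieldType) n (A B : 'M[C]_n) : psd A -> psd B -> psd (A + B).
Proof.
move=> [hA pA] [hB pB]; split; first by rewrite adjmxD hA hB.
by move=> v; rewrite mulmxDr mulmxDl mxDE addr_ge0.
Qed.

Lemma psd0 (C : numClosedFieldType) n : psd (0 : 'M[C]_n).
Proof. by split; [rewrite adjmx0 | move=> v; rewrite mulmx0 mul0mx mxE]. Qed.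

Lemma psd_sum (C : numClosedFieldType) n (I : finType) (F : I -> 'M[C]_n) :
  (forall i, psd (F i)) -> psd (\sum_i F i).
Proof.
move=> h; elim/big_ind: _ => //; [exact: psd0 | exact: psd_add].
Qed.

Lemma psd_scale (C : numClosedFieldType) n (a : C) (A : 'M[C]_n) :
  0 <= a -> psd A -> psd (a *: A).
Proof.
move=> a0 [hA pA]; split; first by rewrite adjmxZ hA geC0_conj.
by move=> v; rewrite -scalemxAr -scalemxAl mxZE mulr_ge0.
Qed.

Lemma psd_conj (C : numClosedFieldType) m n (K : 'M[C]_(m, n)) (A : 'M[C]_n) :
  psd A -> psd (K *m A *m adjmx K).
Proof.
move=> [hA pA]; split; first by rewrite !adjmxM adjmxK hA mulmxA.
move=> v; have := pA (v *m K).
by rewrite adjmxM !mulmxA.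
Qed.

Lemma conjCM (C : numClosedFieldType) (x y : C) : (x * y)^* = x^* * y^*.
Proof. exact: rmorphM. Qed.

Lemma psd_struct (C : numClosedFieldType) m n (K : 'M[C]_(m, n)) (S : 'M[C]_m) (T : 'M[C]_n) :
  K *m adjmx K = 1%:M -> psd T ->
  (forall v : 'rV[C]_n, (v *m T *m adjmx v) 0 0 <= (v *m (adjmx K *m S *m K) *m adjmx v) 0 0) ->
  T = adjmx K *m (K *m T *m adjmx K) *m K.
Proof.
move=> hKK hT hle.
set N := 1%:M - adjmx K *m K.
have NK : N *m adjmx K = 0 by rewrite mulmxBl mul1mx -mulmxA hKK mulmx1 subrr.
have hN : adjmx N = N by rewrite adjmxB adjmx1 adjmxM adjmxK.
have NT : N *m T = 0.
  apply/row_matrixP => i; rewrite row0 rowE mulmxA; apply: psd_zero => //.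
  set v := delta_mx 0 i *m N.
  apply/eqP; rewrite eq_le; apply/andP; split; last by case: hT.
  have := hle v; rewrite !mulmxA.
  have -> : v *m adjmx K = 0 by rewrite /v -mulmxA NK mulmx0.
  by rewrite !mul0mx => h; rewrite (le_trans h) // mxE.
have e1 : adjmx K *m K *m T = T.
  by move: NT; rewrite /N mulmxBl mul1mx => /eqP; rewrite subr_eq0 => /eqP/esym.
have TN : T *m N = 0.
  have := congr1 (@adjmx C _ _) NT.
  by rewrite adjmxM hN; case: hT => -> _; rewrite adjmx0.
have e2 : T *m adjmx K *m K = T.
  by move: TN; rewrite /N mulmxBr mulmx1 mulmxA => /eqP; rewrite subr_eq0 => /eqP/esym.
by rewrite !mulmxA e1.
Qed.

Lemma sum_tens (R : nmodType) m n (F : 'I_(m * n) -> R) :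
  \sum_k F k = \sum_(i < m) \sum_(j < n) F (mxtens_index (i, j)).
Proof.
rewrite pair_big /=.
rewrite (reindex (@mxtens_index m n)) /=; last first.
  by exists (@mxtens_unindex m n) => x _; [rewrite mxtens_indexK | rewrite mxtens_unindexK].
by apply: eq_bigr => -[i j].
Qed.

Definition Kmx (C : numClosedFieldType) m n (u : 'cV[C]_m) : 'M[C]_(n, m * n) :=
  \matrix_(k, j) ((u (mxtens_unindex j).1 0)^* * ((mxtens_unindex j).2 == k)%:R).

Lemma KmxE (C : numClosedFieldType) m n (u : 'cV[C]_m) k i l :
  Kmx n u k (mxtens_index (i, l)) = (u i 0)^* * (l == k)%:R.
Proof. by rewrite mxE mxtens_indexK. Qed.

Lemma unit_sum (C : numClosedFieldType) m (u : 'cV[C]_m) :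
  (adjmx u *m u) 0 0 = \sum_i (u i 0)^* * u i 0.
Proof. by rewrite mxE; apply: eq_bigr => i _; rewrite adjmxE. Qed.

Lemma sum_delta (R : pzSemiRingType) n (k : 'I_n) (F : 'I_n -> R) :
  \sum_l (l == k)%:R * F l = F k.
Proof.
rewrite (bigD1 k) //= eqxx mul1r big1 ?addr0 // => l /negPf ->.
by rewrite mul0r.
Qed.

Lemma sum_delta' (R : pzSemiRingType) n (k : 'I_n) (F : 'I_n -> R) :
  \sum_l (k == l)%:R * F l = F k.
Proof. by rewrite -(sum_delta k F); apply: eq_bigr => l _; rewrite eq_sym. Qed.

Lemma KKt (C : numClosedFieldType) m n (u : 'cV[C]_m) :
  (adjmx u *m u) 0 0 = 1 -> Kmx n u *m adjmx (Kmx n u) = 1%:M.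
Proof.
rewrite unit_sum => hu; apply/matrixP => k k'.
rewrite mxE sum_tens !mxE.
under eq_bigr => i _ do under eq_bigr => l _ do rewrite adjmxE !KmxE conjCM conjC_nat conjCK.
have -> : \sum_(i < m) \sum_(l < n) (u i 0)^* * (l == k)%:R * (u i 0 * (l == k')%:R)
   = \sum_(i < m) ((u i 0)^* * u i 0) * (k == k')%:R.
  apply: eq_bigr => i _.
  rewrite (eq_bigr (fun l => (l == k)%:R * ((u i 0)^* * u i 0 * (l == k')%:R))); last by move=> l _; ring.
  by rewrite sum_delta.
by rewrite -mulr_suml hu mul1r.
Qed.

Lemma tensK (C : numClosedFieldType) m n (u : 'cV[C]_m) (M : 'M[C]_n) :
  (u *m adjmx u) *t M = adjmx (Kmx n u) *m M *m Kmx n u.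
Proof.
apply/matrixP => p q.
case: p / (mxtens_indexP p) => i k; case: q / (mxtens_indexP q) => j l.
rewrite tensmxE [RHS]mxE.
under eq_bigr => b _ do rewrite KmxE mxE.
under eq_bigr => b _ do under eq_bigr => a _ do rewrite adjmxE KmxE conjCM conjC_nat conjCK.
rewrite (eq_bigr (fun b => (l == b)%:R * ((u j 0)^* * \sum_a (k == a)%:R * (u i 0 * M a b)))); last first.
  move=> b _; rewrite mulr_suml !mulr_sumr; apply: eq_bigr => a _; ring.
rewrite sum_delta' sum_delta' mxE big_ord1 adjmxE; ring.
Qed.


Lemma ptrace1_tens (C : numClosedFieldType) m n (A : 'M[C]_m) (B : 'M[C]_n) :
  ptrace1 (A *t B) = \tr A *: B.
Proof.
apply/matrixP => i j; rewrite !mxE mulr_suml; apply: eq_bigr => k _.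
by rewrite tensmxE.
Qed.

Lemma ptrace2_tens (C : numClosedFieldType) m n (A : 'M[C]_m) (B : 'M[C]_n) :
  ptrace2 (A *t B) = \tr B *: A.
Proof.
apply/matrixP => i j; rewrite !mxE mulr_suml; apply: eq_bigr => k _.
by rewrite tensmxE mulrC.
Qed.

Lemma tr_uu (C : numClosedFieldType) m (u : 'cV[C]_m) :
  (adjmx u *m u) 0 0 = 1 -> \tr (u *m adjmx u) = 1.
Proof.
rewrite unit_sum => <-; apply: eq_bigr => i _.
by rewrite mxE big_ord1 adjmxE mulrC.
Qed.

Lemma trZ (C : numClosedFieldType) n (a : C) (A : 'M[C]_n) : \tr (a *: A) = a * \tr A.
Proof. by rewrite /mxtrace mulr_sumr; apply: eq_bigr => i _; rewrite mxE. Qed.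

Lemma tr_sum (C : numClosedFieldType) n (I : finType) (F : I -> 'M[C]_n) :
  \tr (\sum_i F i) = \sum_i \tr (F i).
Proof. exact: raddf_sum. Qed.

Lemma qf_sum (C : numClosedFieldType) n (I : finType) (F : I -> 'M[C]_n) (v : 'rV[C]_n) :
  (v *m (\sum_i F i) *m adjmx v) 0 0 = \sum_i (v *m F i *m adjmx v) 0 0.
Proof. by rewrite mulmx_sumr mulmx_suml summxE. Qed.

Lemma le_sum2 (C : numClosedFieldType) (I J : finType) (F : I -> J -> C) i j :
  (forall i j, 0 <= F i j) -> F i j <= \sum_i \sum_j F i j.
Proof.
move=> h; rewrite (bigD1 i) //= (bigD1 j) //= -addrA lerDl.
by rewrite addr_ge0 // sumr_ge0 // => k _; rewrite sumr_ge0.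
Qed.

Lemma ptrace2_sum (C : numClosedFieldType) m n (I : finType) (F : I -> 'M[C]_(m * n)) :
  ptrace2 (\sum_i F i) = \sum_i ptrace2 (F i).
Proof.
apply/matrixP => i j; rewrite summxE mxE.
under eq_bigr => k _ do rewrite summxE.
rewrite exchange_big; apply: eq_bigr => d _; by rewrite mxE.
Qed.

Lemma tensZ (C : numClosedFieldType) m n (a : C) (A : 'M[C]_m) (B : 'M[C]_n) :
  A *t (a *: B) = (a *: A) *t B.
Proof.
apply/matrixP => p q.
case: p / (mxtens_indexP p) => i k; case: q / (mxtens_indexP q) => j l.
by rewrite !tensmxE !mxE mulrCA mulrA.
Qed.


Lemma qfK (C : numClosedFieldType) m n (K : 'M[C]_(m, n)) (M : 'M[C]_n) (v : 'rV[C]_m) :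
  v *m (K *m M *m adjmx K) *m adjmx v = (v *m K) *m M *m adjmx (v *m K).
Proof. by rewrite adjmxM !mulmxA. Qed.

Lemma zero_family (C : numClosedFieldType) n (I : finType) (F : I -> 'M[C]_n) :
  (forall i, psd (F i)) -> \tr (\sum_i F i) = 0 -> forall i, F i = 0.
Proof.
move=> h t0 i; apply: psd_tr0 => //; move: t0; rewrite tr_sum => t0.
apply: (psumr_eq0P (P := predT) (F := fun i => \tr (F i))) => // j _.
exact: psd_tr_ge0.
Qed.

Theorem mainTheorem2 (C : numClosedFieldType) (nC nC' : nat)
    (A B D X Y W : finType)
    (sigma : A -> B -> D -> X -> Y -> W -> 'M[C]_(nC' * nC))
    (sdw : D -> W -> 'M[C]_nC) (psi : 'M[C]_nC') :
  assemblage3 sigma ->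
  (forall x y d w,
     sdw d w = ptrace1 (\sum_a \sum_b sigma a b d x y w)) ->
  (forall d w x y,
     \sum_a \sum_b sigma a b d x y w = psi *t sdw d w) ->
  extremal_assemblage2 sdw ->
  pure_state psi ->
  exists sab : A -> B -> X -> Y -> 'M[C]_nC',
    (forall a b x y w, sab a b x y = ptrace2 (\sum_d sigma a b d x y w)) /\
    (forall a b d x y w, sigma a b d x y w = sab a b x y *t sdw d w).
Proof.
move=> [hpsd [[rho [hrho hsum]] [_ [_ [nsD _]]]]] _ hdec [[hpsd2 [rho2 [hrho2 hsum2]]] hext] [u [hu hpsi]].
set K := Kmx nC u.
have hKK : K *m adjmx K = 1%:M by exact: KKt.
have hsig : forall a b d x y w,
    sigma a b d x y w = adjmx K *m (K *m sigma a b d x y w *m adjmx K) *m K.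
  move=> a b d x y w; apply: (psd_struct (S := sdw d w)) => // v.
  rewrite -tensK -hpsi -(hdec d w x y) qf_sum.
  under eq_bigr => i _ do rewrite qf_sum.
  apply: (le_sum2 (F := fun a b => (v *m sigma a b d x y w *m adjmx v) 0 0)).
  by move=> i j; case: (hpsd i j d x y w) => _; apply.
have hsdw : forall d w x y,
    sdw d w = K *m (\sum_a \sum_b sigma a b d x y w) *m adjmx K.
  move=> d w x y; rewrite hdec hpsi tensK -/K !mulmxA hKK mul1mx -mulmxA hKK mulmx1.
  by [].
case: (pickP (@predT W)) => [w0 _|hW]; last first.
  exists (fun _ _ _ _ => 0); split => [? ? ? ? w|? ? ? ? ? w]; by have := hW w.
have key : forall a b x y, exists p : C, forall d w,
    K *m sigma a b d x y w *m adjmx K = p *: sdw d w.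
  move=> a b x y.
  pose t d w := K *m sigma a b d x y w *m adjmx K.
  pose r d w := sdw d w - t d w.
  suff : exists p : C, forall d w, t d w = p *: sdw d w by [].
  have ht : forall d w, psd (t d w) by move=> d w; apply: psd_conj; apply: hpsd.
  have hr : forall d w, psd (r d w).
    move=> d w; split.
      by rewrite /r adjmxB (proj1 (hpsd2 d w)) (proj1 (ht d w)).
    move=> v; rewrite /r mulmxBr mulmxBl mxBE subr_ge0 (hsdw d w x y) /t !qfK qf_sum.
    under eq_bigr => i _ do rewrite qf_sum.
    apply: (le_sum2 (F := fun a b => ((v *m K) *m sigma a b d x y w *m adjmx (v *m K)) 0 0)).
    by move=> i j; case: (hpsd i j d x y w) => _; apply.
  have hT : forall w, \sum_d t d w = \sum_d t d w0.
    move=> w; rewrite /t -!mulmx_suml -!mulmx_sumr.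
    by rewrite (nsD a b x y w w0).
  have hR : forall w, \sum_d r d w = rho2 - \sum_d t d w0.
    by move=> w; rewrite /r sumrB hsum2 hT.
  pose p := \tr (\sum_d t d w0).
  have p0 : 0 <= p by apply: psd_tr_ge0; apply: psd_sum.
  have q_eq : \tr (\sum_d r d w0) = 1 - p.
    by rewrite hR raddfB /= (proj2 hrho2).
  have q0 : 0 <= 1 - p by rewrite -q_eq; apply: psd_tr_ge0; apply: psd_sum.
  move: p0; rewrite le_eqVlt => /orP [/eqP p_0 | p_pos].
    exists 0 => d w; rewrite scale0r.
    apply: (zero_family (F := fun d => t d w)) => //.
    by rewrite hT; exact: (esym p_0).
  move: q0; rewrite le_eqVlt => /orP [/eqP q_0 | q_pos].
    exists 1 => d w; rewrite scale1r.
    have := zero_family (F := fun d => r d w) (fun d => hr d w).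
    rewrite hR -(hR w0) q_eq -q_0 => /(_ erefl d) /eqP.
    by rewrite /r subr_eq0 => /eqP <-.
  have pn0 : p != 0 by rewrite gt_eqF.
  have qn0 : 1 - p != 0 by rewrite gt_eqF.
  have p1 : p < 1 by rewrite -subr_gt0.
  have H1 : assemblage2 (fun d w => p^-1 *: t d w).
    split.
      by move=> d w; apply: psd_scale; [rewrite invr_ge0 ltW | exact: ht].
    exists (p^-1 *: \sum_d t d w0); split.
      split; first by apply: psd_scale; [rewrite invr_ge0 ltW | apply: psd_sum].
      by rewrite trZ mulVf.
    by move=> w; rewrite -scaler_sumr hT.
  have H2 : assemblage2 (fun d w => (1 - p)^-1 *: r d w).
    split.
      by move=> d w; apply: psd_scale; [rewrite invr_ge0 ltW | exact: hr].
    exists ((1 - p)^-1 *: (rho2 - \sum_d t d w0)); split.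
      split; first by apply: psd_scale; [rewrite invr_ge0 ltW | rewrite -(hR w0); apply: psd_sum].
      by rewrite trZ -(hR w0) q_eq mulVf.
    by move=> w; rewrite -scaler_sumr hR.
  have H3 : forall d w, sdw d w = p *: (p^-1 *: t d w) + (1 - p) *: ((1 - p)^-1 *: r d w).
    by move=> d w; rewrite !scalerA !mulfV // !scale1r /r addrC subrK.
  have [e1 _] := hext p _ _ p_pos p1 H1 H2 H3.
  exists p => d w; have := congr1 (fun f => f d w) e1 => /= e.
  by rewrite -e scalerA mulfV // scale1r.
exists (fun a b x y => ptrace2 (\sum_d sigma a b d x y w0)); split.
  by move=> a b x y w; rewrite (nsD a b x y w0 w).
move=> a b d x y w; have [p hp] := key a b x y.
have -> : ptrace2 (\sum_d sigma a b d x y w0) = p *: psi.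
  rewrite ptrace2_sum.
  under eq_bigr => d' _ do rewrite hsig hp -tensK -hpsi ptrace2_tens trZ.
  by rewrite -scaler_suml -mulr_sumr -tr_sum hsum2 (proj2 hrho2) mulr1.

by rewrite hsig hp -tensK -hpsi tensZ.
Qed.
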